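(* Let $G$ be a proper interval graph with a proper vertex ordering $<$. Let $e_1,e_2,e_3$ be distinct edges of $G$ such that $l(e_1)\leq l(e_2)\leq l(e_3)$ and $r(e_1)\leq r(e_2)\leq r(e_3)$. If $\{e_1,e_3\}$ is not a uniquely restricted matching in $G$, then neither $\{e_1,e_2\}$ nor $\{e_2,e_3\}$ is a uniquely restricted matching in $G$.
   Context: Graphs are finite, simple, undirected. A proper interval graph is a graph with an interval representation (closed real intervals, adjacency iff intersection for distinct vertices) in which no interval strictly contains another. An ordering $<$ of $V(G)$ is a proper vertex ordering if for all $u<v<w$, $uw\in E(G)$ implies $uv,vw\in E(G)$; $\leq$ denotes $<$ or equality. For an edge $e=uv$, $l(e)=\min_<\{u,v\}$ and $r(e)=\max_<\{u,v\}$. A matching is a set of pairwise vertex-disjoint edges; it is uniquely restricted if no other matching of $G$ matches exactly the same vertex set (a set of edges that is not a matching is in particular not a uniquely restricted matching). *)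

(* Defs.v *)
From Stdlib Require Import Rdefinitions Raxioms.
From mathcomp Require Import all_boot.
Set Implicit Arguments. Unset Strict Implicit. Unset Printing Implicit Defensive.

Definition simple_graph (T : finType) (g : rel T) : Prop :=
  symmetric g /\ irreflexive g.

(* Interval representation by closed real intervals [(I x).1, (I x).2]
   (with (I x).1 <= (I x).2), adjacency iff intersection for distinct vertices,
   and no interval strictly contains another. *)
Definition proper_interval_rep (T : finType) (g : rel T) (I : T -> R * R) : Prop :=
  (forall x, Rle (I x).1 (I x).2) /\
  (forall x y, x != y ->
     (g x y <-> (Rle (I x).1 (I y).2 /\ Rle (I y).1 (I x).2))) /\
  (forall x y, x != y ->
     ~ ((Rle (I y).1 (I x).1 /\ Rle (I x).2 (I y).2) /\ I x <> I y)).

Definition proper_interval_graph (T : finType) (g : rel T) : Prop :=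
  simple_graph g /\ exists I, proper_interval_rep g I.

(* A linear ordering of V(G) is given by an injective rank function
   ord : T -> nat, with u < v iff ord u < ord v. *)
Definition proper_vertex_ordering (T : finType) (g : rel T) (ord : T -> nat) : Prop :=
  injective ord /\
  (forall u v w, ord u < ord v -> ord v < ord w -> g u w -> g u v /\ g v w).

Definition is_edge (T : finType) (g : rel T) (E : {set T}) : Prop :=
  exists u v, g u v /\ E = [set u; v].

Definition matching (T : finType) (g : rel T) (M : {set {set T}}) : Prop :=
  (forall E, E \in M -> is_edge g E) /\
  (forall E F, E \in M -> F \in M -> E != F -> [disjoint E & F]).

Definition matched (T : finType) (M : {set {set T}}) : {set T} := cover M.

Definition uniquely_restricted (T : finType) (g : rel T) (M : {set {set T}}) : Prop :=
  matching g M /\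
  (forall M', matching g M' -> matched M' = matched M -> M' = M).

(* Main.v *)
Require Import Defs.
From Stdlib Require Import Rdefinitions.
From mathcomp Require Import all_boot zify.

Section H.
Variable T : finType.
Implicit Types (g : rel T) (M : {set {set T}}).

Lemma cover2 (A B : {set T}) : cover [set A; B] = A :|: B.
Proof.
apply/setP => x; rewrite inE; apply/bigcupP/orP.
- by case=> E /set2P [] -> ->; [left|right].
- by case=> H; [exists A; rewrite ?set21 | exists B; rewrite ?set22].
Qed.

Lemma disj2 (p q r s : T) : p != r -> p != s -> q != r -> q != s ->
  [disjoint [set p; q] & [set r; s]].
Proof.
move=> h1 h2 h3 h4; rewrite -setI_eq0; apply/eqP/setP => x; rewrite !inE.
case: (eqVneq x p) => [->|]; first by rewrite (negbTE h1) (negbTE h2).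
case: (eqVneq x q) => [->|] //=; by rewrite (negbTE h3) (negbTE h4).
Qed.

Lemma share_notUR g (p q r s x : T) : [set p;q] != [set r;s] ->
  x \in [set p;q] -> x \in [set r;s] ->
  ~ uniquely_restricted g [set [set p;q];[set r;s]].
Proof.
move=> ne hx1 hx2 [[_ Hd] _].
have := Hd _ _ (set21 _ _) (set22 _ _) ne.
by move/disjointFr => /(_ x hx1); rewrite hx2.
Qed.

Lemma swap_notUR g (p q r s : T) : symmetric g ->
  g p q -> g r s -> g p r -> g q s ->
  p != q -> p != r -> p != s -> q != r -> q != s -> r != s ->
  ~ uniquely_restricted g [set [set p;q];[set r;s]].
Proof.
move=> sym gpq grs gpr gqs h1 h2 h3 h4 h5 h6 [_ H].
have Hm : matching g [set [set p;r];[set q;s]].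
  split.
  - by move=> E /set2P [] ->; [exists p, r | exists q, s].
  - move=> E F /set2P [] -> /set2P [] -> //; rewrite ?eqxx // => _.
    + by apply: disj2; rewrite // eq_sym.
    + by apply: disj2; rewrite // eq_sym.
have Hc : matched [set [set p;r];[set q;s]] = matched [set [set p;q];[set r;s]].
  rewrite /matched !cover2; apply/setP => x; rewrite !inE.
  by case: (x == p); case: (x == q); case: (x == r); case: (x == s).
have E := H _ Hm Hc.
have : [set p; r] \in [set [set p;q];[set r;s]] by rewrite -E set21.
case/set2P => /setP => Hs.
- have := Hs r; rewrite !inE eqxx orbT => /esym/orP [] /eqP Er.
  + by rewrite Er eqxx in h2.
  + by rewrite Er eqxx in h4.
- have := Hs p; rewrite !inE eqxx /= => /esym/orP [] /eqP Er.
  + by rewrite Er eqxx in h2.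
  + by rewrite Er eqxx in h3.
Qed.

Lemma set2_contra (p q r s z : T) : [set p;q] = [set r;s] ->
  z \in [set r;s] -> z != p -> z != q -> False.
Proof. by move=> E; rewrite -E !inE => h n1 n2; rewrite (negbTE n1) (negbTE n2) in h. Qed.

Lemma share_eq g M (E F : {set T}) x : matching g M -> E \in M -> F \in M ->
  x \in E -> x \in F -> E = F.
Proof.
move=> [_ Hd] hE hF xE xF; case: (eqVneq E F) => // ne.
by have := disjointFr (Hd _ _ hE hF ne) xE; rewrite xF.
Qed.

Lemma in_cover M (E : {set T}) x : E \in M -> x \in E -> x \in cover M.
Proof. by move=> hE xE; apply/bigcupP; exists E. Qed.

Lemma cover_edge g M x : symmetric g -> matching g M -> x \in cover M ->
  exists y, [set x; y] \in M /\ g x y.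
Proof.
move=> sym [He _] /bigcupP [E hE xE].
have [u [v [guv Ed]]] := He E hE.
move: xE; rewrite Ed => /set2P [] Ex; subst x.
- by exists v; rewrite -Ed.
- by exists u; rewrite sym setUC -Ed.
Qed.

Lemma lg g (ord : T -> nat) u v w : proper_vertex_ordering g ord ->
  ord u < ord v -> ord v <= ord w -> g u w -> g u v.
Proof.
move=> [inj pr] h1 h2 guw; case: (ltngtP (ord v) (ord w)) => h3.
- by case: (pr u v w h1 h3 guw).
- lia.
- by rewrite (inj _ _ h3).
Qed.

Lemma rg g (ord : T -> nat) u v w : proper_vertex_ordering g ord ->
  ord u <= ord v -> ord v < ord w -> g u w -> g v w.
Proof.
move=> [inj pr] h1 h2 guw; case: (ltngtP (ord u) (ord v)) => h3.
- by case: (pr u v w h3 h2 guw).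
- lia.
- by rewrite -(inj _ _ h3).
Qed.

Arguments in_cover {M E x}.
Arguments share_eq {g M E F x}.
Arguments set2_contra {p q r s z}.
Arguments lg {g ord u v w}.
Arguments rg {g ord u v w}.
Ltac neq := apply/eqP => ?; subst; lia.

Lemma keylemma g (ord : T -> nat) (a1 b1 a3 b3 : T) :
  symmetric g -> irreflexive g -> proper_vertex_ordering g ord ->
  g a1 b1 -> g a3 b3 -> ord a1 < ord b1 -> ord a3 < ord b3 ->
  ord a1 < ord a3 -> ord b1 < ord b3 -> ord b1 != ord a3 ->
  ~ uniquely_restricted g [set [set a1; b1]; [set a3; b3]] ->
  g a1 a3 /\ g b1 b3.
Proof.
move=> sym irr pvo g1 g3 o1 o3 o13 o13' ob NUR.
have d1 : a1 != b1 by neq.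
have d2 : a1 != a3 by neq.
have d3 : a1 != b3 by neq.
have d4 : b1 != a3 by apply/eqP => E; rewrite E eqxx in ob.
have d5 : b1 != b3 by neq.
have d6 : a3 != b3 by neq.
case Hk: (g a1 a3 && g b1 b3); first by case/andP: Hk.
exfalso; apply: NUR; split.
  split.
  - by move=> E /set2P [] ->; [exists a1, b1 | exists a3, b3].
  - move=> E F /set2P [] -> /set2P [] -> //; rewrite ?eqxx // => _.
    + by apply: disj2.
    + by apply: disj2; rewrite // eq_sym.
move=> M' Hm Hc.
have cov : forall z, (z \in cover M') = [|| z == a1, z == b1, z == a3 | z == b3].
  by move=> z; move: Hc; rewrite /matched cover2 => ->; rewrite !inE -!orbA.
have [x [E1 gx]] := @cover_edge g M' a1 sym Hm (ltac:(by rewrite cov eqxx)).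
have := in_cover E1 (set22 a1 x); rewrite cov => /or4P [] /eqP Ex; subst x.
- by rewrite irr in gx.
- have [y [E2 gy]] := @cover_edge g M' a3 sym Hm (ltac:(by rewrite cov eqxx !orbT)).
  have := in_cover E2 (set22 a3 y); rewrite cov => /or4P [] /eqP Ey; subst y.
  + by exfalso; apply: (set2_contra (share_eq Hm E1 E2 (set21 _ _) (set22 _ _)) (set21 _ _)); rewrite // eq_sym.
  + by exfalso; apply: (set2_contra (share_eq Hm E1 E2 (set22 _ _) (set22 _ _)) (set21 _ _)); rewrite // eq_sym.
  + by rewrite irr in gy.
  + apply/setP => E; apply/idP/idP.
    * move=> hE; have [u [v [guv Ed]]] := Hm.1 E hE.
      have uE : u \in E by rewrite Ed set21.
      have := in_cover hE uE; rewrite cov => /or4P [] /eqP Eu; subst u.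
      -- by rewrite (share_eq Hm hE E1 uE (set21 _ _)) set21.
      -- by rewrite (share_eq Hm hE E1 uE (set22 _ _)) set21.
      -- by rewrite (share_eq Hm hE E2 uE (set21 _ _)) set22.
      -- by rewrite (share_eq Hm hE E2 uE (set22 _ _)) set22.
    * by case/set2P => ->.
- have [y [E2 gy]] := @cover_edge g M' b1 sym Hm (ltac:(by rewrite cov eqxx !orbT)).
  have := in_cover E2 (set22 b1 y); rewrite cov => /or4P [] /eqP Ey; subst y.
  + by exfalso; apply: (set2_contra (share_eq Hm E1 E2 (set21 _ _) (set22 _ _)) (set21 _ _)); rewrite // eq_sym.
  + by rewrite irr in gy.
  + by exfalso; apply: (set2_contra (share_eq Hm E1 E2 (set22 _ _) (set22 _ _)) (set21 _ _)); rewrite // eq_sym.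
  + by rewrite gx gy in Hk.
- have h1 : g a1 a3 by apply: (lg pvo o13 (ltnW o3) gx).
  have h2 : g b1 b3 by apply: (rg pvo (ltnW o1) o13' gx).
  by rewrite h1 h2 in Hk.
Qed.
End H.
Arguments share_notUR {T g p q r s x}.
Arguments lg {T g ord u v w}.
Arguments rg {T g ord u v w}.
Ltac neq := apply/eqP => ?; subst; lia.

Theorem lemma4 (T : finType) (g : rel T) (ord : T -> nat)
  (a1 b1 a2 b2 a3 b3 : T) :
  proper_interval_graph g ->
  proper_vertex_ordering g ord ->
  g a1 b1 -> g a2 b2 -> g a3 b3 ->
  ord a1 < ord b1 -> ord a2 < ord b2 -> ord a3 < ord b3 ->
  [set a1; b1] != [set a2; b2] ->
  [set a1; b1] != [set a3; b3] ->
  [set a2; b2] != [set a3; b3] ->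
  ord a1 <= ord a2 -> ord a2 <= ord a3 ->
  ord b1 <= ord b2 -> ord b2 <= ord b3 ->
  ~ uniquely_restricted g [set [set a1; b1]; [set a3; b3]] ->
  ~ uniquely_restricted g [set [set a1; b1]; [set a2; b2]] /\
  ~ uniquely_restricted g [set [set a2; b2]; [set a3; b3]].
Proof.
move=> [[sym irr] _] pvo g1 g2 g3 o1 o2 o3 n12 n13 n23 la12 la23 lb12 lb23 NUR.
have inj := pvo.1.
have on : forall x y : T, x != y -> ord x != ord y.
  by move=> x y; apply: contra => /eqP /inj ->.
split.
- case: (eqVneq a1 a2) => [E|d1]; first by subst; exact: (share_notUR n12 (set21 _ _) (set21 _ _)).
  case: (eqVneq b1 b2) => [E|d2]; first by subst; exact: (share_notUR n12 (set22 _ _) (set22 _ _)).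
  case: (eqVneq a2 b1) => [E|d3]; first by subst; exact: (share_notUR n12 (set22 _ _) (set21 _ _)).
  have := on _ _ d1; have := on _ _ d2; have := on _ _ d3 => e3 e2 e1.
  clear n12 n13 n23.
  have ha : ord a1 < ord a2 by lia.
  have hb : ord b1 < ord b2 by lia.
  case: (ltngtP (ord a2) (ord b1)) => h.
  + apply: swap_notUR => //; try neq.
    * exact: (lg pvo ha (ltnW h) g1).
    * exact: (rg pvo (ltnW h) hb g2).
  + have [k1 k2] : g a1 a3 /\ g b1 b3.
      apply: (@keylemma _ g ord a1 b1 a3 b3 sym irr pvo g1 g3 o1 o3 _ _ _ NUR); lia.
    apply: swap_notUR => //; try neq.
    * exact: (lg pvo ha la23 k1).
    * exact: (lg pvo hb lb23 k2).
  + by move/inj: h => h; rewrite h eqxx in d3.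
- case: (eqVneq a2 a3) => [E|d1]; first by subst; exact: (share_notUR n23 (set21 _ _) (set21 _ _)).
  case: (eqVneq b2 b3) => [E|d2]; first by subst; exact: (share_notUR n23 (set22 _ _) (set22 _ _)).
  case: (eqVneq a3 b2) => [E|d3]; first by subst; exact: (share_notUR n23 (set22 _ _) (set21 _ _)).
  have := on _ _ d1; have := on _ _ d2; have := on _ _ d3 => e3 e2 e1.
  clear n12 n13 n23.
  have ha : ord a2 < ord a3 by lia.
  have hb : ord b2 < ord b3 by lia.
  case: (ltngtP (ord a3) (ord b2)) => h.
  + apply: swap_notUR => //; try neq.
    * exact: (lg pvo ha (ltnW h) g2).
    * exact: (rg pvo (ltnW h) hb g3).
  + have [k1 k2] : g a1 a3 /\ g b1 b3.
      apply: (@keylemma _ g ord a1 b1 a3 b3 sym irr pvo g1 g3 o1 o3 _ _ _ NUR); lia.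
    apply: swap_notUR => //; try neq.
    * exact: (rg pvo la12 ha k1).
    * exact: (rg pvo lb12 hb k2).
  + by move/inj: h => h; rewrite h eqxx in d3.
Qed.
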